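(* Let $K$ be a positive definite field and $E$ the graph with two vertices $v,w$ and countably infinitely many edges $e_1,e_2,\dots$ from $v$ to $w$. Then $L_K(E)$ is a Rickart $*$-ring but is not Baer (indeed not graded Baer).
   Context: $L_K(E)$: free $K$-algebra on $\{v,w,e_n,e_n^*\}$ modulo $v^2=v$, $w^2=w$, $vw=wv=0$; $ve_n=e_nw=e_n$; $we_n^*=e_n^*v=e_n^*$; $e_m^*e_n=\delta_{m,n}w$ (no relation at $v$ since $v$ emits infinitely many edges). It is unital with identity $v+w$, $\mathbb Z$-graded by $\deg e_n=1$, $\deg e_n^*=-1$, with involution induced by that of $K$ via $(kpq^* )^*=k^*qp^*$. $K$ positive definite: $\sum k_ik_i^*=0\Rightarrow$ all $k_i=0$. Rickart $*$-ring: right annihilator of every element generated by a projection ($p=p^2=p^*$). Baer: right annihilator of every subset generated by an idempotent; graded Baer: right annihilator of every set of homogeneous elements generated by a homogeneous idempotent. *)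

(* Defs.v *)
From HB Require Import structures.
From mathcomp Require Import all_boot all_order all_algebra.
From Stdlib Require Import ClassicalEpsilon.
Set Implicit Arguments. Unset Strict Implicit. Unset Printing Implicit Defensive.
Import GRing.Theory.
Local Open Scope ring_scope.

(* The Leavitt path algebra L_K(E) of the graph E with two vertices v, w and *)
(* countably many edges e_0, e_1, ... from v to w.                           *)
(* Since v emits infinitely many edges there is no (CK2) relation, and the   *)
(* standard basis of L_K(E) consists of the reduced monomials p q^* with     *)
(* r(p) = r(q):                                                              *)
(*     v,  w,  e_n,  e_n^*,  e_m e_n^*        (m, n : nat).                   *)
(* An element is a finitely supported K-combination of these; we store the   *)
(* coefficients separately:  cv (of v), cw (of w), ce n (of e_n),             *)
(* cs n (of e_n^* ), cm m n (of e_m e_n^* ).  The product below is the         *)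
(* bilinear extension of the multiplication table of these monomials, which  *)
(* is forced by the defining relations v^2=v, w^2=w, vw=wv=0, v e_n = e_n w  *)
(* = e_n, w e_n^* = e_n^* v = e_n^*, e_m^* e_n = delta_{mn} w:                *)
(*   v.v=v, v.e_n=e_n, v.(e_m e_n^* )=e_m e_n^*, w.w=w, w.e_n^*=e_n^*,         *)
(*   e_m.w=e_m, e_m.e_n^*=e_m e_n^*, e_m^*.v=e_m^*, e_m^*.e_n=delta w,         *)
(*   e_k^*.(e_k e_n^* )=e_n^*, (e_i e_j^* ).v=e_i e_j^*,                       *)
(*   (e_i e_j^* ).e_j=e_i, (e_i e_j^* ).(e_j e_l^* )=e_i e_l^*,                 *)
(* all other products of basis monomials being 0.                            *)

Section LPA.
Variable K : fieldType.

Definition fin_supp (f : nat -> K) : Prop :=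
  exists N, forall i, (N <= i)%N -> f i = 0.

Definition fsum (f : nat -> K) : K :=
  match excluded_middle_informative (fin_supp f) with
  | left H => \sum_(i < proj1_sig (constructive_indefinite_description _ H)) f i
  | right _ => 0
  end.

Lemma fsum0 (f : nat -> K) : (forall i, f i = 0) -> fsum f = 0.
Proof.
move=> H; rewrite /fsum; case: excluded_middle_informative => // Hf.
by apply: big1 => i _; apply: H.
Qed.

Record LK := MkLK {
  cv : K; cw : K;
  ce : nat -> K; cs : nat -> K; cm : nat -> nat -> K;
  cfin : exists N, forall i j, (N <= i)%N ->
           [/\ ce i = 0, cs i = 0, cm i j = 0 & cm j i = 0] }.

Definition mulv (x y : LK) : K := cv x * cv y.
Definition mulw (x y : LK) : K := cw x * cw y + fsum (fun n => cs x n * ce y n).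
Definition mule (x y : LK) (i : nat) : K :=
  cv x * ce y i + ce x i * cw y + fsum (fun j => cm x i j * ce y j).
Definition muls (x y : LK) (n : nat) : K :=
  cw x * cs y n + cs x n * cv y + fsum (fun k => cs x k * cm y k n).
Definition mulm (x y : LK) (i l : nat) : K :=
  cv x * cm y i l + ce x i * cs y l + cm x i l * cv y
  + fsum (fun j => cm x i j * cm y j l).

Lemma mul_fin (x y : LK) : exists N, forall i j, (N <= i)%N ->
  [/\ mule x y i = 0, muls x y i = 0, mulm x y i j = 0 & mulm x y j i = 0].
Proof.
case: (cfin x) => Nx Hx; case: (cfin y) => Ny Hy.
exists (maxn Nx Ny) => i j Hi.
have Hxi : (Nx <= i)%N by apply: leq_trans Hi; apply: leq_maxl.
have Hyi : (Ny <= i)%N by apply: leq_trans Hi; apply: leq_maxr.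
case: (Hx i j Hxi) => exi sxi mxij mxji.
case: (Hy i j Hyi) => eyi syi myij myji.
split.
- have F : fsum (fun k => cm x i k * ce y k) = 0.
    by apply: fsum0 => k; case: (Hx i k Hxi) => _ _ -> _; rewrite mul0r.
  by rewrite /mule F eyi exi mulr0 mul0r !addr0.
- have F : fsum (fun k => cs x k * cm y k i) = 0.
    by apply: fsum0 => k; case: (Hy i k Hyi) => _ _ _ ->; rewrite mulr0.
  by rewrite /muls F syi sxi mulr0 mul0r !addr0.
- have F : fsum (fun k => cm x i k * cm y k j) = 0.
    by apply: fsum0 => k; case: (Hx i k Hxi) => _ _ -> _; rewrite mul0r.
  by rewrite /mulm F myij exi mxij mulr0 !mul0r !addr0.
- have F : fsum (fun k => cm x j k * cm y k i) = 0.
    by apply: fsum0 => k; case: (Hy i k Hyi) => _ _ _ ->; rewrite mulr0.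
  by rewrite /mulm F myji syi mxji !mulr0 mul0r !addr0.
Qed.

Definition Lmul (x y : LK) : LK :=
  @MkLK (mulv x y) (mulw x y) (mule x y) (muls x y) (mulm x y) (mul_fin x y).

Lemma zero_fin : exists N : nat, forall i j : nat, (N <= i)%N ->
  [/\ (fun _ : nat => 0 : K) i = 0, (fun _ : nat => 0 : K) i = 0,
      (fun _ _ : nat => 0 : K) i j = 0 & (fun _ _ : nat => 0 : K) j i = 0].
Proof. by exists 0%N. Qed.

Definition Lzero : LK :=
  @MkLK 0 0 (fun _ => 0) (fun _ => 0) (fun _ _ => 0) zero_fin.

(* the involution of L_K(E), induced by an involution conj of K:
   (k p q^* )^* = conj(k) q p^*.  So v^*=v, w^*=w, (e_n)^* = e_n^*,
   (e_n^* )^* = e_n, (e_m e_n^* )^* = e_n e_m^*. *)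
Variable conj : {rmorphism K -> K}.

Lemma star_fin (x : LK) : exists N, forall i j, (N <= i)%N ->
  [/\ conj (cs x i) = 0, conj (ce x i) = 0,
      conj (cm x j i) = 0 & conj (cm x i j) = 0].
Proof.
case: (cfin x) => N HN; exists N => i j Hi.
by case: (HN i j Hi) => -> -> -> ->; rewrite rmorph0.
Qed.

Definition Lstar (x : LK) : LK :=
  @MkLK (conj (cv x)) (conj (cw x)) (fun i => conj (cs x i))
       (fun i => conj (ce x i)) (fun i j => conj (cm x j i)) (star_fin x).

Inductive basis := Bv | Bw | Be of nat | Bs of nat | Bm of nat & nat.

Definition coef (x : LK) (b : basis) : K :=
  match b with
  | Bv => cv x | Bw => cw x | Be n => ce x n | Bs n => cs x n | Bm m n => cm x m n
  end.

Definition bdeg (b : basis) : int :=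
  match b with
  | Bv | Bw | Bm _ _ => 0 | Be _ => 1 | Bs _ => -1
  end.

Definition homogeneous (x : LK) : Prop :=
  exists d : int, forall b, coef x b != 0 -> bdeg b = d.

Definition rann_is (S : LK -> Prop) (e : LK) : Prop :=
  forall y, (forall s, S s -> Lmul s y = Lzero) <-> exists z, y = Lmul e z.

Definition Rickart_star : Prop :=
  forall x : LK, exists p : LK,
    [/\ Lmul p p = p, Lstar p = p & rann_is (fun s => s = x) p].

End LPA.

Definition Baer (K : fieldType) : Prop :=
  forall S : LK K -> Prop, exists e : LK K, Lmul e e = e /\ rann_is S e.

Definition graded_Baer (K : fieldType) : Prop :=
  forall S : LK K -> Prop, (forall s, S s -> homogeneous s) ->
    exists e : LK K, [/\ homogeneous e, Lmul e e = e & rann_is S e].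

Definition positive_definite (K : fieldType) (conj : {rmorphism K -> K}) : Prop :=
  forall s : seq K, \sum_(k <- s) k * conj k = 0 -> all (fun k => k == 0) s.

(* Main.v *)
Require Import Defs.
From HB Require Import structures.
From mathcomp Require Import all_boot all_order all_algebra ring.
From Stdlib Require Import FunctionalExtensionality ProofIrrelevance ClassicalEpsilon.
Set Implicit Arguments. Unset Strict Implicit. Unset Printing Implicit Defensive.
Import GRing.Theory.
Local Open Scope ring_scope.


Section Fin.
Variable K : fieldType.
Variable conj : {rmorphism K -> K}.
Hypothesis conjK : involutive conj.
Hypothesis pd : positive_definite conj.

Definition adj m n (X : 'M[K]_(m, n)) : 'M[K]_(n, m) := (map_mx conj X)^T.

Lemma adjM m n p (X : 'M[K]_(m, n)) (Y : 'M[K]_(n, p)) :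
  adj (X *m Y) = adj Y *m adj X.
Proof. by rewrite /adj map_mxM trmx_mul. Qed.

Lemma adjK m n (X : 'M[K]_(m, n)) : adj (adj X) = X.
Proof. by apply/matrixP => i j; rewrite !mxE conjK. Qed.

Lemma adj_eq0 m n (X : 'M[K]_(m, n)) : adj X *m X = 0 -> X = 0.
Proof.
move=> H; apply/matrixP => i j; rewrite mxE.
have := congr1 (fun M : 'M[K]_n => M j j) H; rewrite !mxE => Hs.
have := @pd [seq X k j | k <- enum 'I_m].
rewrite big_map big_enum /=.
have E : \sum_(k in 'I_m) X k j * conj (X k j) = 0.
  by rewrite -[RHS]Hs; apply: eq_big => // k; rewrite !mxE mulrC.
move=> /(_ E) /allP /(_ (X i j)).
move=> Hx; apply/eqP; apply: Hx.
by apply: (map_f (fun k => X k j)); rewrite mem_enum.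
Qed.

Lemma adj_inv n (G : 'M[K]_n) : adj (invmx G) = invmx (adj G).
Proof. by rewrite /adj map_invmx trmx_inv. Qed.

Lemma finite_proj n (A : 'M[K]_n) : exists P T : 'M[K]_n,
  [/\ P *m P = P, adj P = P, A *m P = 0 & 1%:M - P = T *m A].
Proof.
have [r [B [Bf BA BY]]] : exists r (B : 'M[K]_(r, n)), [/\ row_free B,
    B *m A^T = 0 & forall m (Y : 'M[K]_(m, n)), Y *m A^T = 0 -> (Y <= B)%MS].
  exists (\rank (kermx A^T)), (row_base (kermx A^T)); split.
  - exact: row_base_free.
  - by apply/sub_kermxP; rewrite eq_row_base.
  - by move=> m Y HY; rewrite eq_row_base; apply/sub_kermxP.
set M := B^T.
have AM : A *m M = 0.
  by apply: trmx_inj; rewrite trmx_mul trmxK trmx0.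
set G := adj M *m M.
have Gu : G \in unitmx.
  rewrite -row_free_unit -kermx_eq0; apply/eqP.
  set U := kermx G.
  have UG : U *m G = 0 by rewrite mulmx_ker.
  have X0 : M *m adj U = 0.
    apply: adj_eq0; rewrite adjM adjK -mulmxA (mulmxA (adj M)) -/G.
    by rewrite mulmxA UG mul0mx.
  have HUB : U *m map_mx conj B = 0.
    apply/matrixP => i j; have := congr1 (fun X : 'M[K]_(_,_) => X j i) X0.
    rewrite !mxE => E.
    transitivity (conj (\sum_k M j k * adj U k i)); last by rewrite E rmorph0.
    rewrite rmorph_sum; apply: eq_bigr => k _; rewrite !mxE rmorphM conjK mulrC //.
  have : map_mx conj (U *m map_mx conj B) == 0 by rewrite HUB map_mx0.
  rewrite map_mxM (_ : map_mx conj (map_mx conj B) = B); last first.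
    by apply/matrixP => i j; rewrite !mxE conjK.
  rewrite mulmx_free_eq0 // => /eqP HU.
  apply/matrixP => i j; have := congr1 (fun M : 'M[K]_(_,_) => M i j) HU.
  by rewrite !mxE => /eqP; rewrite fmorph_eq0 => /eqP.
set P := M *m invmx G *m adj M.
have PM : P *m M = M by rewrite /P -!mulmxA -/G mulVmx // mulmx1.
exists P.
have HP : (1%:M - P <= A)%MS.
  rewrite submxE; apply/eqP.
  set C := cokermx A.
  have : (C^T <= B)%MS.
    by apply: BY; rewrite -trmx_mul mulmx_coker trmx0.
  case/submxP => D HD.
  have -> : C = M *m D^T by rewrite -[C]trmxK HD trmx_mul.
  by rewrite mulmxBl mul1mx mulmxA PM subrr.
case/submxP: HP => T HT; exists T; split => //.
- by rewrite {1}/P -!mulmxA (mulmxA (adj M)) -/G !mulmxA PM.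
- rewrite /P !adjM adjK adj_inv /G adjM adjK mulmxA //.
- by rewrite /P !mulmxA AM !mul0mx.
Qed.
End Fin.


Section Inf.
Variable K : fieldType.
Implicit Types x y : LK K.

Lemma LK_ext x y : cv x = cv y -> cw x = cw y -> (forall i, ce x i = ce y i) ->
  (forall i, cs x i = cs y i) -> (forall i j, cm x i j = cm y i j) -> x = y.
Proof.
case: x => a b e s m f; case: y => a' b' e' s' m' f' /= -> -> He Hs Hm.
have ? : e = e' by apply: functional_extensionality.
have ? : s = s' by apply: functional_extensionality.
have ? : m = m'.
  by apply: functional_extensionality => i; apply: functional_extensionality.
subst; f_equal; apply: proof_irrelevance.
Qed.

Definition supp (N : nat) x := forall i j, (N <= i)%N ->
  [/\ ce x i = 0, cs x i = 0, cm x i j = 0 & cm x j i = 0].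

Lemma supp_ex x : exists N, supp N x.
Proof. exact: cfin. Qed.

Lemma supp_mono N M x : (N <= M)%N -> supp N x -> supp M x.
Proof. by move=> NM H i j Hi; apply: H; apply: leq_trans Hi. Qed.

Lemma sum_widen (f : nat -> K) N M : (forall i, (N <= i)%N -> f i = 0) ->
  (N <= M)%N -> \sum_(i < M) f i = \sum_(i < N) f i.
Proof.
move=> Hf NM; rewrite (big_ord_widen M f NM) [RHS]big_mkcond /=.
by apply: eq_bigr => i _; case: ifP => // /negbT; rewrite -leqNgt => /Hf ->.
Qed.

Lemma fsum_lt (f : nat -> K) N : (forall i, (N <= i)%N -> f i = 0) ->
  fsum f = \sum_(i < N) f i.
Proof.
move=> Hf; rewrite /fsum; case: excluded_middle_informative => [H|H]; last first.
  by exfalso; apply: H; exists N.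
case: constructive_indefinite_description => N' HN' /=.
rewrite -(@sum_widen f N' (maxn N N')) ?leq_maxr //.
by rewrite (@sum_widen f N (maxn N N')) ?leq_maxl.
Qed.

Definition ent x (i j : nat) : K :=
  match i, j with
  | 0, 0 => cw x
  | i'.+1, 0 => ce x i'
  | 0, j'.+1 => cs x j'
  | i'.+1, j'.+1 => cm x i' j' + (i' == j')%:R * cv x
  end.

Definition mat N x : 'M[K]_N.+1 := \matrix_(i, j) ent x i j.

Lemma sum_lift N (F : nat -> K) :
  \sum_(k < N) F (lift ord0 k : nat) = \sum_(k < N) F k.+1.
Proof. by apply: eq_bigr => k _; rewrite lift0. Qed.

Lemma sdl N i (a : K) (G : nat -> K) : (i < N)%N ->
  \sum_(k < N) ((i == k)%:R * a) * G k = a * G i.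
Proof.
move=> Hi; rewrite (bigD1 (Ordinal Hi)) //= eqxx mul1r big1 ?addr0 //.
move=> k Hk; suff -> : (i == k) = false by rewrite /= mulr0n !mul0r.
apply/negbTE; apply: contra Hk => /eqP Hik; apply/eqP; apply: val_inj => /=.
by rewrite Hik.
Qed.

Lemma sdr N l (b : K) (G : nat -> K) : (l < N)%N ->
  \sum_(k < N) G k * ((k == l :> nat)%:R * b) = G l * b.
Proof.
move=> Hl; rewrite (bigD1 (Ordinal Hl)) //= eqxx mul1r big1 ?addr0 //.
move=> k Hk; suff -> : (k == l :> nat) = false by rewrite /= mulr0n !mul0r mulr0.
apply/negbTE; apply: contra Hk => /eqP Hik; apply/eqP; apply: val_inj => /=.
by rewrite Hik.
Qed.

Lemma supp_mul N x y : supp N x -> supp N y -> supp N (Lmul x y).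
Proof.
move=> Hx Hy i j Hi.
case: (Hx i j Hi) => exi sxi mxij mxji.
case: (Hy i j Hi) => eyi syi myij myji.
split.
- have F : fsum (fun k => cm x i k * ce y k) = 0.
    by apply: fsum0 => k; case: (Hx i k Hi) => _ _ -> _; rewrite mul0r.
  by rewrite /= /mule F eyi exi mulr0 mul0r !addr0.
- have F : fsum (fun k => cs x k * cm y k i) = 0.
    by apply: fsum0 => k; case: (Hy i k Hi) => _ _ _ ->; rewrite mulr0.
  by rewrite /= /muls F syi sxi mulr0 mul0r !addr0.
- have F : fsum (fun k => cm x i k * cm y k j) = 0.
    by apply: fsum0 => k; case: (Hx i k Hi) => _ _ -> _; rewrite mul0r.
  by rewrite /= /mulm F myij exi mxij mulr0 !mul0r !addr0.
- have F : fsum (fun k => cm x j k * cm y k i) = 0.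
    by apply: fsum0 => k; case: (Hy i k Hi) => _ _ _ ->; rewrite mulr0.
  by rewrite /= /mulm F myji syi mxji !mulr0 mul0r !addr0.
Qed.

Lemma mat_mul N x y : supp N x -> supp N y ->
  mat N (Lmul x y) = mat N x *m mat N y.
Proof.
move=> Hx Hy; apply/matrixP => -[i Hi] [j Hj]; rewrite !mxE big_ord_recl /=.
rewrite !mxE.
under eq_bigr => k _ do rewrite !mxE !lift0.
case: i Hi => [|i] Hi; case: j Hj => [|j] Hj /=.
- rewrite /mulw (@fsum_lt _ N) //.
  by move=> k Hk; case: (Hx k 0%N Hk) => _ -> _ _; rewrite mul0r.
- rewrite /muls (@fsum_lt _ N); last first.
    by move=> k Hk; case: (Hx k 0%N Hk) => _ -> _ _; rewrite mul0r.
  under eq_bigr => k _ do rewrite mulrDr.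
  rewrite big_split /= (@sdr N j) //; ring.
- rewrite /mule (@fsum_lt _ N); last first.
    by move=> k Hk; case: (Hy k 0%N Hk) => -> _ _ _; rewrite mulr0.
  under eq_bigr => k _ do rewrite mulrDl.
  rewrite big_split /= (@sdl N i (cv x) (ce y)) //; ring.
- rewrite /mulm (@fsum_lt _ N); last first.
    by move=> k Hk; case: (Hy k j Hk) => _ _ -> _; rewrite mulr0.
  under eq_bigr => k _ do rewrite mulrDl !mulrDr.
  rewrite !big_split /= (@sdr N j) //.
  rewrite (@sdl N i (cv x) (fun k => cm y k j)) //.
  rewrite (@sdl N i (cv x) (fun k => (k == j)%:R * cv y)) // /mulv.
  set d := ((i == j)%:R : K); set S := \sum_(i0 < N) _; ring.
Qed.

Lemma ent_mat N x (i j : 'I_N.+1) : mat N x i j = ent x i j.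
Proof. by rewrite mxE. Qed.

Lemma mat_inj N x y : supp N x -> supp N y -> cv x = cv y -> mat N x = mat N y ->
  x = y.
Proof.
move=> Hx Hy Hv Hm.
have E i j (Hi : (i < N.+1)%N) (Hj : (j < N.+1)%N) : ent x i j = ent y i j.
  by rewrite -!(ent_mat _ (Ordinal Hi) (Ordinal Hj)) Hm.
apply: LK_ext => //.
- exact: (E 0%N 0%N).
- move=> i; case: (ltnP i N) => Hi; first exact: (E i.+1 0%N).
  by case: (Hx i 0%N Hi) => -> _ _ _; case: (Hy i 0%N Hi) => -> _ _ _.
- move=> i; case: (ltnP i N) => Hi; first exact: (E 0%N i.+1).
  by case: (Hx i 0%N Hi) => _ -> _ _; case: (Hy i 0%N Hi) => _ -> _ _.
- move=> i j; case: (ltnP i N) => Hi; last first.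
    by case: (Hx i j Hi) => _ _ -> _; case: (Hy i j Hi) => _ _ -> _.
  case: (ltnP j N) => Hj; last first.
    by case: (Hx j i Hj) => _ _ _ ->; case: (Hy j i Hj) => _ _ _ ->.
  have := E i.+1 j.+1 Hi Hj; rewrite /= Hv => /addIr //.
Qed.

Lemma supp_zero N : supp N (@Lzero K).
Proof. by []. Qed.

Lemma mat_zero N : mat N (@Lzero K) = 0.
Proof.
apply/matrixP => -[[|i] Hi] [[|j] Hj]; rewrite !mxE //= mulr0 addr0 //.
Qed.

Definition Lone : LK K :=
  @MkLK K 1 1 (fun _ => 0) (fun _ => 0) (fun _ _ => 0) (zero_fin K).

Lemma supp_one N : supp N Lone.
Proof. by []. Qed.

Lemma mat_one N : mat N Lone = 1%:M.
Proof.
apply/matrixP => -[[|i] Hi] [[|j] Hj]; rewrite !mxE //= ?add0r ?mulr1 //.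
Qed.

Lemma add_fin x y : exists N, forall i j, (N <= i)%N ->
  [/\ ce x i + ce y i = 0, cs x i + cs y i = 0,
      cm x i j + cm y i j = 0 & cm x j i + cm y j i = 0].
Proof.
case: (cfin x) => Nx Hx; case: (cfin y) => Ny Hy.
exists (maxn Nx Ny) => i j Hi.
have Hxi : (Nx <= i)%N by apply: leq_trans Hi; apply: leq_maxl.
have Hyi : (Ny <= i)%N by apply: leq_trans Hi; apply: leq_maxr.
case: (Hx i j Hxi) => -> -> -> ->; case: (Hy i j Hyi) => -> -> -> ->.
by rewrite !addr0.
Qed.

Definition Ladd x y : LK K :=
  @MkLK K (cv x + cv y) (cw x + cw y) (fun i => ce x i + ce y i)
    (fun i => cs x i + cs y i) (fun i j => cm x i j + cm y i j) (add_fin x y).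

Lemma supp_add N x y : supp N x -> supp N y -> supp N (Ladd x y).
Proof.
move=> Hx Hy i j Hi; case: (Hx i j Hi) => /= -> -> -> ->.
by case: (Hy i j Hi) => -> -> -> ->; rewrite !addr0.
Qed.

Lemma mat_add N x y : mat N (Ladd x y) = mat N x + mat N y.
Proof.
apply/matrixP => -[[|i] Hi] [[|j] Hj]; rewrite !mxE //=.
set d := ((i == j)%:R : K); ring.
Qed.

Definition gM N (A : 'M[K]_N.+1) (i j : nat) : K :=
  if (i < N.+1)%N && (j < N.+1)%N then A (inord i) (inord j) else 0.

Lemma emb_fin N (a : K) (A : 'M[K]_N.+1) : exists M, forall i j, (M <= i)%N ->
  [/\ gM A i.+1 0 = 0, gM A 0 i.+1 = 0,
      gM A i.+1 j.+1 - ((i == j) && (i < N)%N)%:R * a = 0 &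
      gM A j.+1 i.+1 - ((j == i) && (j < N)%N)%:R * a = 0].
Proof.
exists N => i j Hi; rewrite /gM /= !ltnS.
have -> : (i < N)%N = false by apply/negbTE; rewrite -leqNgt.
rewrite /= ?andbF /= mulr0n mul0r subr0; split => //.
case: eqP => [->|_] /=; last by rewrite mulr0n mul0r subr0.
by rewrite ltnNge Hi /= mulr0n mul0r subr0.
Qed.

Definition emb N (a : K) (A : 'M[K]_N.+1) : LK K :=
  @MkLK K a (gM A 0 0) (fun i => gM A i.+1 0) (fun i => gM A 0 i.+1)
    (fun i j => gM A i.+1 j.+1 - ((i == j) && (i < N)%N)%:R * a) (emb_fin a A).

Lemma supp_emb N a A : supp N (@emb N a A).
Proof.
move=> i j Hi; rewrite /= /gM /= !ltnS.
have -> : (i < N)%N = false by apply/negbTE; rewrite -leqNgt.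
rewrite /= ?andbF /= mulr0n mul0r subr0; split => //.
case: eqP => [->|_] /=; last by rewrite mulr0n mul0r subr0.
by rewrite ltnNge Hi /= mulr0n mul0r subr0.
Qed.

Lemma mat_emb N a A : mat N (@emb N a A) = A.
Proof.
have IE k (H : (k < N.+1)%N) : inord k = Ordinal H by apply: val_inj; rewrite /= inordK.
apply/matrixP => -[[|i] Hi] [[|j] Hj]; rewrite !mxE /= /gM ?Hi ?Hj /=;
  try by f_equal; apply: val_inj; rewrite /= inordK.
rewrite (_ : (i < N)%N = true) // andbT subrK.
by f_equal; apply: val_inj; rewrite /= inordK.
Qed.

Lemma cv_emb N a A : cv (@emb N a A) = a.
Proof. by []. Qed.

Variable conj : {rmorphism K -> K}.

Lemma supp_star N x : supp N x -> supp N (Lstar conj x).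
Proof.
move=> Hx i j Hi; case: (Hx i j Hi) => a b c d /=.
by rewrite a b c d rmorph0.
Qed.

Lemma mat_star N x : mat N (Lstar conj x) = (map_mx conj (mat N x))^T.
Proof.
apply/matrixP => -[[|i] Hi] [[|j] Hj]; rewrite !mxE //=.
by rewrite rmorphD rmorphM rmorph_nat eq_sym.
Qed.
End Inf.


Lemma rickart (K : fieldType) (conj : {rmorphism K -> K}) :
  involutive conj -> positive_definite conj -> Rickart_star conj.
Proof.
move=> conjK pd x.
case: (supp_ex x) => N Hx.
case: (finite_proj conjK pd (mat N x)) => P [T [PP Padj AP HT]].
set a := cv x.
set c := 1 - a^-1 * a.
have [ac cc conjc] : [/\ a * c = 0, c * c = c & conj c = c].
  rewrite /c; case: (eqVneq a 0) => [->|an].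
    by rewrite invr0 !mul0r subr0 mulr1 rmorph1.
  by rewrite mulVf // subrr !mulr0 rmorph0.
pose p := emb c P; pose t := emb a^-1 T.
have Hp : supp N p by apply: supp_emb.
have Ht : supp N t by apply: supp_emb.
have pp : Lmul p p = p.
  apply: (mat_inj (supp_mul Hp Hp) Hp) => //.
  by rewrite mat_mul // mat_emb.
have ps : Lstar conj p = p.
  apply: (mat_inj (supp_star conj Hp) Hp) => //.
  by rewrite mat_star mat_emb.
have xp : Lmul x p = Lzero K.
  apply: (mat_inj (supp_mul Hx Hp) (@supp_zero _ _)) => //.
  by rewrite mat_mul // mat_emb AP mat_zero.
have ptx : Ladd p (Lmul t x) = Lone K.
  apply: (mat_inj (supp_add Hp (supp_mul Ht Hx)) (@supp_one _ _)).
    by rewrite /= /mulv /= /c subrK.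
  by rewrite mat_add mat_mul // !mat_emb -HT mat_one addrC subrK.
exists p; split => // y; split.
- move=> H; have xy := H x erefl; exists y.
  case: (supp_ex y) => Ny Hy.
  have NM : (N <= maxn N Ny)%N by apply: leq_maxl.
  have NyM : (Ny <= maxn N Ny)%N by apply: leq_maxr.
  move: (maxn N Ny) NM NyM => M NM NyM.
  have HxM := supp_mono NM Hx; have HpM := supp_mono NM Hp.
  have HtM := supp_mono NM Ht; have HyM := supp_mono NyM Hy.
  apply: (mat_inj HyM (supp_mul HpM HyM)).
    have := congr1 (@cv K) xy; rewrite /= /mulv /= -/a.
    rewrite /c; case: (eqVneq a 0) => [->|an].
      by rewrite invr0 !mul0r subr0 mul1r.
    by move/eqP; rewrite mulf_eq0 (negbTE an) /= => /eqP ->; rewrite mulr0.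
  have E := congr1 (@mat K M) ptx.
  rewrite mat_add mat_mul // mat_one in E.
  rewrite mat_mul // -[LHS]mul1mx -E mulmxDl -mulmxA.
  by rewrite -(mat_mul HxM HyM) xy mat_zero mulmx0 addr0.
- case=> z ->; move=> s ->.
  case: (supp_ex z) => Nz Hz.
  have NM : (N <= maxn N Nz)%N by apply: leq_maxl.
  have NyM : (Nz <= maxn N Nz)%N by apply: leq_maxr.
  move: (maxn N Nz) NM NyM => M NM NyM.
  have HxM := supp_mono NM Hx; have HpM := supp_mono NM Hp.
  have HzM := supp_mono NyM Hz.
  apply: (mat_inj (supp_mul HxM (supp_mul HpM HzM)) (@supp_zero _ _)).
    by rewrite /= /mulv /= mulrA -/a ac mul0r.
  rewrite (mat_mul HxM (supp_mul HpM HzM)) (mat_mul HpM HzM) mulmxA.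
  by rewrite -(mat_mul HxM HpM) xp mat_zero mul0mx.
Qed.

Section NB.
Variable K : fieldType.

Lemma es_fin (k : nat) : exists N, forall i j, (N <= i)%N ->
  [/\ (fun _ : nat => 0 : K) i = 0, (fun i : nat => (i == k)%:R : K) i = 0,
      (fun _ _ : nat => 0 : K) i j = 0 & (fun _ _ : nat => 0 : K) j i = 0].
Proof.
exists k.+1 => i j Hi; split => //=.
by case: eqP => [E|_] //; move: Hi; rewrite E ltnn.
Qed.

Definition es (k : nat) : LK K :=
  @MkLK K 0 0 (fun _ => 0) (fun i => (i == k)%:R) (fun _ _ => 0) (es_fin k).

Lemma em_fin (k : nat) : exists N, forall i j, (N <= i)%N ->
  [/\ (fun _ : nat => 0 : K) i = 0, (fun _ : nat => 0 : K) i = 0,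
      (fun i j : nat => ((i == k) && (j == k))%:R : K) i j = 0 &
      (fun i j : nat => ((i == k) && (j == k))%:R : K) j i = 0].
Proof.
exists k.+1 => i j Hi; split => //=.
  by case: eqP => [E|_] //; move: Hi; rewrite E ltnn.
by case: (i =P k) => [E|_]; [move: Hi; rewrite E ltnn | rewrite andbF].
Qed.

Definition em (k : nat) : LK K :=
  @MkLK K 0 0 (fun _ => 0) (fun _ => 0)
    (fun i j => ((i == k) && (j == k))%:R) (em_fin k).

Definition S0 (s : LK K) : Prop := exists n, s = es n.*2.

Lemma S0_hom s : S0 s -> homogeneous s.
Proof.
case=> n ->; exists (-1) => -[| |m|m|m l] //=; rewrite ?eqxx //.
Qed.

Lemma fsum_delta (m : nat) (f : nat -> K) :
  fsum (fun k => (k == m)%:R * f k) = f m.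
Proof.
rewrite (@fsum_lt _ _ m.+1); last first.
  by move=> i Hi; case: eqP => [E|_]; [move: Hi; rewrite E ltnn | rewrite mul0r].
rewrite big_ord_recr /= eqxx mul1r big1 ?add0r // => i _.
by rewrite (_ : (i == m :> nat) = false) ?mul0r // ltn_eqF.
Qed.

Lemma not_baer_aux (e : LK K) : Lmul e e = e -> rann_is S0 e -> False.
Proof.
move=> ee re.
have He : forall s, S0 s -> Lmul s e = Lzero K.
  by apply/(re e); exists e.
case: (supp_ex e) => Ne Hn.
have ve : cv e = 0.
  have := congr1 (fun u => cs u Ne.*2) (He _ (ex_intro _ Ne erefl)).
  rewrite /= /muls /= mul0r add0r eqxx mul1r.
  rewrite (fsum_delta (Ne.*2) (fun k => cm e k Ne.*2)).
  have H2 : (Ne <= Ne.*2)%N by rewrite -addnn leq_addl.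
  case: (Hn Ne.*2 Ne.*2 H2) => _ _ -> _.
  by rewrite addr0.
set k := (Ne.*2).+1.
have Hk : (Ne <= k)%N by rewrite /k -addnn; apply: leq_trans (leq_addl Ne Ne) _.
have ann : forall s, S0 s -> Lmul s (em k) = Lzero K.
  move=> s [n ->]; apply: LK_ext => /=.
  - by rewrite /mulv mul0r.
  - by rewrite /mulw mul0r add0r; apply: fsum0 => i; rewrite mulr0.
  - by move=> i; rewrite /mule !mul0r !add0r fsum0.
  - move=> i; rewrite /muls !mul0r mulr0 !add0r; apply: fsum0 => j.
    rewrite /=; case: eqP => [->|_] /=; last by rewrite mulr0n mul0r.
    rewrite (_ : (n.*2 == k) = false) ?mulr0 //.
    apply/negbTE/negP => /eqP E.
    by have := congr1 odd E; rewrite /k /= !odd_double.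
  - by move=> i j; rewrite /mulm /= !mul0r !add0r fsum0 // => l; rewrite mul0r.
have [z Hz] : exists z, em k = Lmul e z by apply/(re (em k)).
have := congr1 (fun u => cm u k k) Hz; rewrite /= /mulm eqxx /= ve mul0r add0r.
case: (Hn k k Hk) => -> _ -> _; rewrite !mul0r !add0r.
rewrite fsum0 => [|j]; last by case: (Hn k j Hk) => _ _ -> _; rewrite mul0r.
by move/eqP; rewrite oner_eq0.
Qed.
End NB.

Theorem mainTheorem17 (K : fieldType) (conj : {rmorphism K -> K}) :
  involutive conj -> positive_definite conj ->
  [/\ Rickart_star conj, ~ Baer K & ~ graded_Baer K].
Proof.
move=> cK pd; split; first exact: rickart.
- by move=> HB; case: (HB (@S0 K)) => e [ee re]; exact: (not_baer_aux ee re).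
- move=> HB; case: (HB (@S0 K) (@S0_hom K)) => e [_ ee re].
  exact: (not_baer_aux ee re).
Qed.
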